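(* Let $k$ be a positive integer, let $L=\{\ell_1,\ldots,\ell_s\}\subset[0,k-1]$ with $\ell_1<\cdots<\ell_s$, and let $L^C=[0,k-1]\setminus L=\{\ell'_1,\ldots,\ell'_{k-s}\}$ with $\ell'_1<\cdots<\ell'_{k-s}$. Suppose $L$ contains $b$ full runs of consecutive integers with lengths $m_i$ ($1\le i\le b$) and $L^C$ contains $b'$ full runs of consecutive integers with lengths $m'_j$ ($1\le j\le b'$). Then \[\prod_{i=1}^{b}m_i!\cdot\frac{\binom{k}{k-\ell_1}\binom{k-\ell_1-1}{k-\ell_2}\cdots\binom{k-\ell_{s-1}-1}{k-\ell_s}}{\prod_{i=1}^s(\ell_i+1)(k-\ell_i)}\cdot\prod_{j=1}^{b'}m'_j!\cdot\frac{\binom{k}{k-\ell'_1}\binom{k-\ell'_1-1}{k-\ell'_2}\cdots\binom{k-\ell'_{k-s-1}-1}{k-\ell'_{k-s}}}{\prod_{i=1}^{k-s}(\ell'_i+1)(k-\ell'_i)}=\frac{1}{k!}.\]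
   Context: $[a,b]=\{a,\ldots,b\}$. For a finite set of integers $\{x_1<\cdots<x_t\}$, a subset $\{x_m,\ldots,x_{m+p}\}$ is a run if $x_{m+i}=x_m+i$ for $0\le i\le p$; it is a full run if moreover ($m=1$ or $x_{m-1}<x_m-1$) and ($m+p=t$ or $x_{m+p+1}>x_{m+p}+1$). The set decomposes uniquely into full runs; the length of a run is its cardinality. *)

(* Defs.v *)
From mathcomp Require Import all_boot all_order all_algebra.
Set Implicit Arguments. Unset Strict Implicit. Unset Printing Implicit Defensive.
Import Order.TTheory GRing.Theory Num.Theory.

Definition elems (k : nat) (L : {set 'I_k}) : seq nat :=
  sort leq [seq val i | i in L].

Definition full_run (S : seq nat) (a m : nat) : bool :=
  [&& 0 < m, all (fun x => x \in S) (iota a m),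
      (a == 0) || (a.-1 \notin S) & a + m \notin S].

Definition run_fact_prod (k : nat) (S : seq nat) : nat :=
  \prod_(0 <= a < k) \prod_(1 <= m < k.+1 | full_run S a m) m`!.

(* binom(k, k-l1) binom(k-l1-1, k-l2) ... binom(k-l_{s-1}-1, k-l_s);
   called with p = 0 the first factor is binom(k - 0, k - l1). *)
Fixpoint binom_chain (k p : nat) (S : seq nat) : nat :=
  if S is l :: S' then 'C(k - p, k - l) * binom_chain k l.+1 S' else 1.

Definition term (k : nat) (S : seq nat) : rat :=
  ((run_fact_prod k S)%:R * (binom_chain k 0 S)%:R
   / (\prod_(l <- S) ((l + 1) * (k - l)))%:R)%R.

(* Main.v *)
Require Import Defs.
From mathcomp Require Import all_boot all_order all_algebra.
From mathcomp Require Import zify ring lra.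
Import Order.TTheory GRing.Theory Num.Theory.

Definition frP (P : pred nat) a m :=
  [&& 0 < m, all P (iota a m), (a == 0) || ~~ P a.-1 & ~~ P (a + m)].

Lemma frP_ext P1 P2 a m : P1 =1 P2 -> frP P1 a m = frP P2 a m.
Proof. by move=> e; rewrite /frP (eq_all e) !e. Qed.

Lemma frP_ge (P Q : pred nat) l a m : l < a -> (forall x, l <= x -> P x = Q x) ->
  frP P a m = frP Q a m.
Proof.
move=> ha h; rewrite /frP (@eq_in_all _ P Q); last first.
  by move=> x; rewrite mem_iota => /andP[hx _]; apply: h; lia.
rewrite (h a.-1); last by lia.
by rewrite (h (a + m)) //; lia.
Qed.

Lemma frP_start (P : pred nat) p l m : p < l ->
  (forall x, x <= l -> P x = (p <= x < l)) -> frP P p m = (m == l - p).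
Proof.
move=> hpl hP; rewrite /frP.
apply/idP/eqP.
- case/and4P => m0 /allP hall _ hpm.
  case: (ltngtP m (l-p)) => // h.
  + by move: hpm; rewrite hP; lia.
  + by have := hall l; rewrite mem_iota hP //; lia.
- move=> ->; apply/and4P; split.
  + lia.
  + by apply/allP => x; rewrite mem_iota => /andP h; rewrite hP; lia.
  + by case: p hpl hP => [|p] //= hpl hP; rewrite hP; lia.
  + by rewrite subnKC ?(ltnW hpl) // hP // ltnn andbF.
Qed.

Lemma frP_later (P : pred nat) p l a m : p < a -> a <= l ->
  (forall x, x <= l -> P x = (p <= x < l)) -> frP P a m = false.
Proof.
move=> h1 h2 hP; rewrite /frP (_ : (a == 0) = false); last by lia.
rewrite hP; last by lia.
have -> : (p <= a.-1 < l) = true by lia.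
by rewrite /= !andbF.
Qed.

Lemma seg k p l (P : pred nat) : p <= l <= k ->
  (forall x, x <= l -> P x = (p <= x < l)) ->
  \prod_(p <= a < l) \prod_(1 <= m < k.+1 | frP P a m) m`! = (l - p)`!.
Proof.
move=> /andP[hpl hlk] hP.
case: (ltngtP p l) hpl => // [hlt|<-] _; last by rewrite big_geq // subnn.
rewrite big_ltn // (eq_bigl (fun m => m == l - p)); last first.
  by move=> m; apply: frP_start.
rewrite big_nat1_eq.
have -> : (1 <= l - p < k.+1) = true by lia.
rewrite [X in _ * X]big_nat_cond big1 ?muln1 // => a /andP[/andP[h1 h2] _].
by rewrite big1 // => m; rewrite (@frP_later P p l a m h1 (ltnW h2) hP).
Qed.

Fixpoint gapprod k p (S : seq nat) : nat :=
  if S is l :: S' then (l - p)`! * gapprod k l.+1 S' else (k - p)`!.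

Lemma gap_lemma k S : forall p, sorted ltn S -> all (fun x => p <= x < k) S ->
  \prod_(p <= a < k) \prod_(1 <= m < k.+1 |
     frP (fun x => (p <= x < k) && (x \notin S)) a m) m`! = gapprod k p S.
Proof.
elim: S => [|l S IH] p /= hs hall.
- case: (leqP p k) => hpk; last first.
    have -> : k - p = 0 by lia.
    by rewrite big_geq // ltnW.
  apply: seg; first by rewrite hpk leqnn.
  by move=> x _; rewrite ?inE andbT.
- have hS : sorted ltn S := path_sorted hs.
  have hallS : all (fun x => l < x) S := order_path_min ltn_trans hs.
  case/andP: hall => /andP[hpl hlk] hall.
  have notS : forall x, x <= l -> x \notin S.
    by move=> x hx; apply/negP => /(allP hallS) /=; lia.
  rewrite (big_cat_nat _ (n := l.+1)); [|lia|lia].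
  rewrite big_nat_recr //=.
  rewrite (@seg k p l); [| lia |]; last first.
    move=> x hx; rewrite /= inE (negbTE (notS x hx)) orbF.
    case: (ltngtP x l) => h; lia.
  rewrite big1; last first.
    move=> m; rewrite /frP; case: m => [|m] //=.
    by rewrite !inE eqxx /= ?andbF.
  rewrite muln1 -(IH l.+1 hS); last first.
    apply/allP => x hx; have := allP hallS x hx; have := allP hall x hx; lia.
  congr (_ * _); apply: eq_big_nat => a /andP[ha _].
  apply: eq_bigl => m; apply: (@frP_ge _ _ l) => // x hx.
  rewrite !inE.
  case: (ltngtP x l) hx => // [h|->] _.
  + by have -> : p <= x by lia.
  + by rewrite /= ?ltnn ?andbF.
Qed.

Lemma chain_lemma k S : forall p, sorted ltn S -> all (fun x => p <= x < k) S ->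
  p <= k ->
  binom_chain k p S * \prod_(l <- S) (k - l) * gapprod k p S = (k - p)`!.
Proof.
elim: S => [|l S IH] p /= hs hall hpk.
  by rewrite big_nil !mul1n.
have hS : sorted ltn S := path_sorted hs.
have hallS : all (fun x => l < x) S := order_path_min ltn_trans hs.
case/andP: hall => /andP[hpl hlk] hall.
have := IH l.+1 hS.
move=> /(_ _ hlk) IH'.
have IH2 := IH' (_ : all _ S).
rewrite big_cons.
have hkl : k - l = (k - l.+1).+1 by lia.
have hf : (k-l) * (k-l.+1)`! = (k-l)`! by rewrite hkl factS.
have e : 'C(k - p, k - l) * binom_chain k l.+1 S * ((k - l) * \prod_(j <- S) (k - j)) *
    ((l - p)`! * gapprod k l.+1 S) =
    'C(k - p, k - l) * ((k - l) * (k - l.+1)`!) * (l - p)`!.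
  rewrite -IH2; first ring.
  apply/allP => x hx; have := allP hallS x hx; have := allP hall x hx; lia.
rewrite e hf -(bin_fact (_ : k - l <= k - p)); last by lia.
have -> : k - p - (k - l) = l - p by lia.
ring.
Qed.

Lemma mem_elems k (Y : {set 'I_k}) x (h : x < k) : (x \in elems Y) = (Ordinal h \in Y).
Proof.
rewrite /elems mem_sort; apply/imageP/idP => [[i hi e]| hi].
  by have -> : Ordinal h = i by apply: val_inj; rewrite /= e.
by exists (Ordinal h).
Qed.

Lemma notin_elems k (Y : {set 'I_k}) x : k <= x -> (x \in elems Y) = false.
Proof.
move=> hx; apply/negbTE; rewrite /elems mem_sort; apply/negP => /imageP[i _ hi].
by move: (ltn_ord i); rewrite -hi; lia.
Qed.

Lemma elems_sorted k (Y : {set 'I_k}) : sorted ltn (elems Y).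
Proof.
rewrite ltn_sorted_uniq_leq sort_uniq (sort_sorted leq_total) andbT.
rewrite map_inj_uniq ?enum_uniq //; exact: val_inj.
Qed.

Lemma elems_all k (Y : {set 'I_k}) : all (fun x => 0 <= x < k) (elems Y).
Proof.
by apply/allP => x; rewrite /elems mem_sort => /imageP[i _ ->] /=.
Qed.

Lemma rfp_gap k (X : {set 'I_k}) : run_fact_prod k (elems (~: X)) = gapprod k 0 (elems X).
Proof.
rewrite -gap_lemma ?elems_sorted ?elems_all //.
rewrite /run_fact_prod; apply: eq_big_nat => a _; apply: eq_bigl => m.
change (frP (fun x => x \in elems (~: X)) a m = frP (fun x => (0 <= x < k) && (x \notin elems X)) a m).
apply: frP_ext => x /=.
case: (ltnP x k) => h.
  by rewrite !(mem_elems _ _ _ h) in_setC.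
by rewrite !notin_elems // ltnNge h andbF.
Qed.

Lemma prod_split k (X : {set 'I_k}) (F : nat -> nat) :
  \prod_(l <- elems X) F l * \prod_(l <- elems (~: X)) F l = \prod_(i < k) F i.
Proof.
rewrite /elems !(perm_big _ (permEl (perm_sort leq _))) /= !big_image.
rewrite [RHS](bigID (mem X)) /=; congr (_ * _).
by apply: eq_bigl => i; rewrite in_setC.
Qed.

Lemma prod_succ k : \prod_(i < k) i.+1 = k`!.
Proof. by rewrite fact_prod big_add1 big_mkord. Qed.

Lemma prod_rev k : \prod_(i < k) (k - i) = k`!.
Proof.
rewrite -prod_succ (reindex_inj rev_ord_inj); apply: eq_bigr => i _ /=.
have := ltn_ord i; lia.
Qed.

Theorem claim1 (k : nat) (L : {set 'I_k}) :
  0 < k ->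
  (term k (elems L) * term k (elems (~: L)) = 1 / (k`!)%:R)%R.
Proof.
move=> _.
have hA := chain_lemma _ _ _ (elems_sorted _ L) (elems_all _ L) (leq0n k).
have hB := chain_lemma _ _ _ (elems_sorted _ (~: L)) (elems_all _ (~: L)) (leq0n k).
rewrite subn0 in hA hB.
have rB := rfp_gap _ L.
have rA : run_fact_prod k (elems L) = gapprod k 0 (elems (~: L)).
  by rewrite -{1}(setCK L) rfp_gap.
have p1 := prod_split _ L (fun l => l + 1).
have p2 := prod_split _ L (fun l => k - l).
rewrite /= prod_rev in p2.
rewrite (eq_bigr (fun i : 'I_k => (val i).+1)) ?prod_succ in p1; last by move=> i _; rewrite addn1.
rewrite /term !big_split /= rA rB.
move: hA hB p1 p2.
set cA := binom_chain _ _ (elems L).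
set cB := binom_chain _ _ (elems (~: L)).
set PkA := \prod_(l <- elems L) (k - l).
set PkB := \prod_(l <- elems (~: L)) (k - l).
set P1A := \prod_(l <- elems L) (l + 1).
set P1B := \prod_(l <- elems (~: L)) (l + 1).
set gA := gapprod k 0 (elems L).
set gB := gapprod k 0 (elems (~: L)).
move=> hA hB p1 p2.
have eN : gB * cA * (gA * cB) = k`!.
  apply/eqP; rewrite -(eqn_pmul2r (fact_gt0 k)); apply/eqP.
  transitivity ((cA * PkA * gA) * (cB * PkB * gB)); first by rewrite -p2; ring.
  by rewrite hA hB.
have eD : P1A * PkA * (P1B * PkB) = k`! * k`!.
  by rewrite -{1}p1 -p2; ring.
rewrite mulf_div -!natrM eN eD natrM.
have hk : ((k`!)%:R != 0 :> rat)%R by rewrite pnatr_eq0 -lt0n fact_gt0.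
by field.
Qed.
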